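(* Let $p\in\mathcal M_1^+$ and define $\pi_k=\sum_{\ell\ge k}\frac{1}{\ell+1}p_\ell$ for $k\in\mathbb N_0$. Then $\pi=(\pi_k)\in\mathcal M_1^+$, and $$\mathcal R_1(p)_i=\sum_{j=0}^i\pi_j\,\pi_{i-j}=(\pi*\pi)_i\quad\text{for all }i\in\mathbb N_0,$$ where $\mathcal R_1(p)_i=\sum_{k,\ell\ge0,\ k+\ell\ge i}\frac{1+\min\{k,\ell,i,k+\ell-i\}}{(k+1)(\ell+1)}p_kp_\ell$ and $*$ is convolution in $\ell^1(\mathbb N_0)$.
   Context: $\mathcal M_1^+$ is the set of probability measures on $\mathbb N_0$, identified with nonnegative sequences summing to $1$. *)

(* Defs.v *)
From Stdlib Require Import Reals Lia.
From Coquelicot Require Export Coquelicot.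
Open Scope R_scope.

Definition M1plus (p : nat -> R) : Prop :=
  (forall k, 0 <= p k) /\ is_series p 1.

Definition pi_of (p : nat -> R) (k : nat) : R :=
  Series (fun n => p (n + k)%nat / INR (n + k + 1)).

Definition R1_term (p : nat -> R) (i k l : nat) : R :=
  if (i <=? k + l)%nat then
    (1 + INR (Nat.min (Nat.min k l) (Nat.min i (k + l - i))))
      / (INR (k + 1) * INR (l + 1)) * p k * p l
  else 0.

(* R_1(p)_i = sum over k,l >= 0 with k+l >= i (nonnegative terms; iterated sum) *)
Definition R_1 (p : nat -> R) (i : nat) : R :=
  Series (fun k => Series (fun l => R1_term p i k l)).

Definition conv (a b : nat -> R) (i : nat) : R :=
  sum_n (fun j => a j * b (i - j)%nat) i.

(* Main.v *)
Require Import Defs.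
From Stdlib Require Import Reals Lia Lra Bool.
From Coquelicot Require Import Coquelicot.
Open Scope R_scope.

Definition aa (p : nat -> R) (k : nat) : R := p k / INR (k + 1).

Lemma INR_S_pos (k : nat) : 0 < INR (k + 1).
Proof. apply lt_0_INR; lia. Qed.

Lemma aa_bounds p (Hp : M1plus p) k : 0 <= aa p k <= p k.
Proof.
  destruct Hp as [Hpos _]. unfold aa.
  pose proof (INR_S_pos k). pose proof (Hpos k).
  assert (1 <= INR (k+1)) by (rewrite plus_INR; simpl; pose proof (pos_INR k); lra).
  split.
  - apply Rdiv_le_0_compat; lra.
  - apply (Rmult_le_reg_r (INR (k+1))); [lra|].
    unfold Rdiv; rewrite Rmult_assoc, Rinv_l by lra. nra.
Qed.

Lemma ex_p p (Hp : M1plus p) : ex_series p.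
Proof. exists 1. apply Hp. Qed.

Lemma ex_aa p (Hp : M1plus p) : ex_series (aa p).
Proof.
  apply (@ex_series_le R_AbsRing R_CompleteNormedModule _ p); [|apply ex_p; auto].
  intro n. pose proof (aa_bounds p Hp n). change norm with Rabs. simpl.
  rewrite Rabs_pos_eq; lra.
Qed.

Lemma ex_shift (a : nat -> R) m : ex_series a -> ex_series (fun n => a (n + m)%nat).
Proof.
  intro H. apply (proj1 (ex_series_incr_n a m)) in H.
  eapply ex_series_ext; [|exact H]. intro n; simpl. f_equal; lia.
Qed.

Lemma Series_tail (a : nat -> R) N : ex_series a ->
  Series a = sum_n a N + Series (fun n => a (n + S N)%nat).
Proof.
  intro H. rewrite (Series_incr_n a (S N)) by (lia || auto).
  rewrite sum_n_Reals. simpl. f_equal. apply Series_ext. intro; f_equal; lia.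
Qed.


Lemma Series_nonneg (a : nat -> R) : (forall n, 0 <= a n) -> ex_series a -> 0 <= Series a.
Proof.
  intros H E.
  assert (Z : Series (fun n => 0 * a n) = 0) by (rewrite Series_scal_l; ring).
  rewrite <- Z. apply Series_le; auto. intro n; split; [lra|auto]. rewrite Rmult_0_l; auto.
Qed.

Lemma pi_step p (Hp : M1plus p) m : pi_of p m = aa p m + pi_of p (S m).
Proof.
  unfold pi_of. rewrite Series_incr_1.
  - unfold aa. replace (0 + m)%nat with m by lia. f_equal. apply Series_ext. intro n.
    replace (S n + m)%nat with (n + S m)%nat by lia; reflexivity.
  - apply (ex_shift (aa p) m). apply ex_aa; auto.
Qed.

Lemma pi_nonneg p (Hp : M1plus p) m : 0 <= pi_of p m.
Proof.
  apply Series_nonneg.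
  - intro n. apply (aa_bounds p Hp (n+m)).
  - apply (ex_shift (aa p) m). apply ex_aa; auto.
Qed.

Lemma pi_partial p (Hp : M1plus p) N :
  sum_n (pi_of p) N = sum_n p N + INR (S N) * pi_of p (S N).
Proof.
  induction N.
  - rewrite !sum_O. rewrite pi_step by auto. unfold aa. simpl.
    field.
  - rewrite !sum_Sn, IHN. change plus with Rplus.
    rewrite (pi_step p Hp (S N)). unfold aa.
    pose proof (INR_S_pos (S N)).
    replace (INR (S (S N))) with (INR (S N + 1)) by (f_equal; lia).
    rewrite !S_INR. rewrite plus_INR, S_INR. simpl. field.
    rewrite plus_INR, S_INR in H. simpl in H. lra.
Qed.

Lemma pi_tail_bound p (Hp : M1plus p) N :
  INR (S N) * pi_of p (S N) <= 1 - sum_n p N.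
Proof.
  assert (Hs : Series p = 1) by (apply is_series_unique; apply Hp).
  rewrite (Series_tail p N (ex_p p Hp)) in Hs.
  assert (INR (S N) * pi_of p (S N) <= Series (fun n => p (n + S N)%nat)); [|lra].
  unfold pi_of. rewrite <- Series_scal_l.
  apply Series_le.
  - intro n. pose proof (aa_bounds p Hp (n + S N)). unfold aa in *.
    pose proof (INR_S_pos (n + S N)).
    pose proof (pos_INR (S N)).
    split; [nra|].
    assert (INR (S N) <= INR (n + S N + 1)) by (apply le_INR; lia).
    destruct Hp as [Hpos _]. pose proof (Hpos (n + S N)%nat).
    apply (Rmult_le_reg_r (INR (n + S N + 1))); [lra|].
    replace (INR (S N) * (p (n + S N)%nat / INR (n + S N + 1)) * INR (n + S N + 1))
      with (INR (S N) * p (n + S N)%nat) by (field; lra).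
    nra.
  - apply ex_shift, ex_p; auto.
Qed.

Lemma part1 p (Hp : M1plus p) : M1plus (pi_of p).
Proof.
  split; [intro; apply pi_nonneg; auto|].
  assert (HQ : is_lim_seq (sum_n p) 1) by apply Hp.
  enough (H : is_lim_seq (sum_n (pi_of p)) 1) by exact H.
  apply (is_lim_seq_le_le (sum_n p) (sum_n (pi_of p)) (fun _ => 1)).
  - intro N. rewrite pi_partial by auto.
    pose proof (pi_tail_bound p Hp N).
    pose proof (pi_nonneg p Hp (S N)). pose proof (pos_INR (S N)).
    split; nra.
  - exact HQ.
  - apply is_lim_seq_const.
Qed.

Definition bb (p : nat -> R) (j k : nat) : R := if (j <=? k)%nat then aa p k else 0.

Lemma pi_bb p j : pi_of p j = Series (bb p j).
Proof.
  rewrite (Series_incr_n_aux (bb p j) j).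
  - unfold pi_of, bb. apply Series_ext. intro n.
    replace (j <=? j + n)%nat with true by (symmetry; apply Nat.leb_le; lia).
    unfold aa. replace (j + n)%nat with (n + j)%nat by lia. reflexivity.
  - intros k Hk. unfold bb. replace (j <=? k)%nat with false by (symmetry; apply Nat.leb_nle; lia).
    reflexivity.
Qed.

Lemma ex_bb p (Hp : M1plus p) j : ex_series (bb p j).
Proof.
  apply (@ex_series_le R_AbsRing R_CompleteNormedModule _ (aa p)); [|apply ex_aa; auto].
  intro n. change norm with Rabs. simpl. unfold bb.
  pose proof (aa_bounds p Hp n).
  destruct (j <=? n)%nat; [rewrite Rabs_pos_eq; lra| rewrite Rabs_R0; lra].
Qed.

Lemma sum_series (F : nat -> nat -> R) n : (forall j, ex_series (F j)) ->
  is_series (fun k => sum_n (fun j => F j k) n) (sum_n (fun j => Series (F j)) n).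
Proof.
  intro H. induction n.
  - rewrite sum_O. apply (is_series_ext (F 0%nat)).
    + intro k. rewrite sum_O. reflexivity.
    + apply Series_correct; auto.
  - rewrite sum_Sn. apply (is_series_ext (fun k => plus (sum_n (fun j => F j k) n) (F (S n) k))).
    + intro k. rewrite sum_Sn. reflexivity.
    + exact (is_series_plus _ _ _ _ IHn (Series_correct _ (H (S n)))).
Qed.

Lemma sum_Series (F : nat -> nat -> R) n : (forall j, ex_series (F j)) ->
  sum_n (fun j => Series (F j)) n = Series (fun k => sum_n (fun j => F j k) n).
Proof.
  intro H. symmetry. apply is_series_unique. apply sum_series; auto.
Qed.

Lemma count_sum (i k l n : nat) :
  sum_n (fun j => if (andb (j <=? k)%nat (i - j <=? l)%nat) then 1 else 0) n
  = INR (Nat.min (S n) (S k) - Nat.min (Nat.min (S n) (S k)) (i - l)).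
Proof.
  induction n.
  - rewrite sum_O.
    destruct (Nat.leb_spec 0 k); destruct (Nat.leb_spec (i - 0) l); cbn [andb];
    match goal with |- _ = INR ?e =>
      first [ replace e with 1%nat by lia; reflexivity
            | replace e with 0%nat by lia; reflexivity ] end.
  - rewrite sum_Sn, IHn. change plus with Rplus.
    destruct (Nat.leb_spec (S n) k); destruct (Nat.leb_spec (i - S n) l); cbn [andb];
    match goal with |- INR ?e0 + _ = INR ?e =>
      first [ replace e with (S e0) by lia; rewrite S_INR; reflexivity
            | replace e with e0 by lia; lra ] end.
Qed.

Lemma pointwise p i k l :
  sum_n (fun j => bb p j k * bb p (i - j) l) i = R1_term p i k l.
Proof.
  rewrite (sum_n_ext _ (fun j => mult (aa p k * aa p l)
     (if (andb (j <=? k)%nat (i - j <=? l)%nat) then 1 else 0))).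
  2:{ intro j. unfold bb. change mult with Rmult.
      destruct (j <=? k)%nat; destruct (i - j <=? l)%nat; simpl; ring. }
  rewrite sum_n_mult_l, count_sum. change mult with Rmult.
  unfold R1_term, aa.
  pose proof (INR_S_pos k). pose proof (INR_S_pos l).
  destruct (i <=? k + l)%nat eqn:E.
  - apply Nat.leb_le in E.
    replace (Nat.min (S i) (S k) - Nat.min (Nat.min (S i) (S k)) (i - l))%nat
      with (S (Nat.min (Nat.min k l) (Nat.min i (k + l - i)))) by lia.
    rewrite S_INR. match goal with |- ?a = ?b => change (@eq R a b) end. field; split; lra.
  - apply Nat.leb_nle in E.
    replace (Nat.min (S i) (S k) - Nat.min (Nat.min (S i) (S k)) (i - l))%nat
      with 0%nat by lia.
    simpl. match goal with |- ?a = ?b => change (@eq R a b) end. ring.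
Qed.

Lemma part2 p (Hp : M1plus p) i : R_1 p i = conv (pi_of p) (pi_of p) i.
Proof.
  unfold conv.
  rewrite (sum_n_ext _ (fun j => Series (fun k => Series (fun l => bb p j k * bb p (i - j) l)))).
  2:{ intro j. rewrite !pi_bb. rewrite <- Series_scal_r. apply Series_ext. intro k.
      rewrite <- Series_scal_l. reflexivity. }
  rewrite sum_Series.
  2:{ intro j. apply (ex_series_ext (fun k => bb p j k * Series (bb p (i - j)))).
      - intro k. rewrite <- Series_scal_l. reflexivity.
      - apply ex_series_scal_r, ex_bb; auto. }
  unfold R_1. apply Series_ext. intro k.
  rewrite sum_Series.
  2:{ intro j. apply (ex_series_ext (fun l => scal (bb p j k) (bb p (i - j) l))).
      - intro l. reflexivity.
      - exact (@ex_series_scal_l R_AbsRing R_NormedModule _ _ (ex_bb p Hp (i - j))). }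
  apply Series_ext. intro l. symmetry. apply pointwise.
Qed.

Theorem proposition9 (p : nat -> R) (Hp : M1plus p) :
  M1plus (pi_of p) /\
  (forall i : nat, R_1 p i = conv (pi_of p) (pi_of p) i).
Proof.
  split; [apply part1; auto | intro i; apply part2; auto].
Qed.
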